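(* Let $f:(N,F,\{F_\sigma\})\to(N',F',\{F'_\tau\})$ be a morphism of KM fans, $\sigma\in F$, $\tau\in F'$ a cone containing $f_{\mathbb R}(\sigma)$, and $L'\subseteq N'$ a lifting of $F'_\tau$. (1) There exists a lifting $L\subseteq N$ of $F_\sigma$ with $f(L)\subseteq L'$. (2) If $f$ is injective on torsion subgroups $N_{\rm tor}\to N'_{\rm tor}$ (equivalently $\operatorname{Ker}f$ is torsion-free) and $f|_{F_\sigma}:F_\sigma\to F'_\tau$ is bijective, then the map $(N/F_\sigma)_{\rm tor}\to(N'/F'_\tau)_{\rm tor}$ induced by $f$ is injective. (3) If $(N/F_\sigma)_{\rm tor}\to(N'/F'_\tau)_{\rm tor}$ is injective, then $L:=f^{-1}(L')$ is a lifting of $F_\sigma$, and for this $L$ the induced map of finite groups $N/L\to N'/L'$ is injective. (4) If there is a lifting $L$ of $F_\sigma$ with $f(L)\subseteq L'$ and $N/L\to N'/L'$ injective, then $(N/F_\sigma)_{\rm tor}\to(N'/F'_\tau)_{\rm tor}$ is injective.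
   Context: For a finitely generated abelian group $N$, $N_{\mathbb R}=N\otimes\mathbb R$ and $N_{\rm tor}$ is its torsion subgroup; for a subgroup $A\subseteq N$ and $\sigma\subseteq N_{\mathbb R}$, $A\cap\sigma$ means elements of $A$ whose image lies in $\sigma$. A KM fan $(N,F,\{F_\sigma\})$: a finitely generated abelian group $N$, a fan $F$ in $N_{\mathbb R}$ (finite nonempty set of sharp cones generated by images of elements of $N$, closed under faces, pairwise meeting in common faces), and for each $\sigma\in F$ a torsion-free subgroup $F_\sigma$ of finite index in $N\cap\operatorname{Span}\sigma$, with $F_\tau=F_\sigma\cap\operatorname{Span}\tau$ for faces $\tau\le\sigma$. A morphism is a homomorphism $f:N\to N'$ such that for every $\sigma\in F$ some $\tau\in F'$ has $f_{\mathbb R}(\sigma)\subseteq\tau$ and $f(F_\sigma)\subseteq F'_\tau$. A lifting of the lattice datum $F_\sigma$ is a torsion-free subgroup $L\subseteq N$ with $N/L$ finite and $F_\sigma=L\cap\operatorname{Span}\sigma$. *)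

(* Defs.v *)
From HB Require Import structures.
From mathcomp Require Import all_boot all_order all_algebra.
From mathcomp Require Import reals.

Set Implicit Arguments.
Unset Strict Implicit.
Unset Printing Implicit Defensive.

Import Order.TTheory GRing.Theory Num.Theory.
Local Open Scope ring_scope.

Definition additive_fun (N N' : zmodType) (f : N -> N') : Prop :=
  forall x y, f (x - y) = f x - f y.

Definition torsion (N : zmodType) (x : N) : Prop :=
  exists k : nat, (0 < k)%N /\ x *+ k = 0.

Definition finitely_generated (N : zmodType) : Prop :=
  exists (k : nat) (g : 'I_k -> N),
    forall x, exists c : 'I_k -> int, x = \sum_(i < k) g i *~ c i.

Definition subgroup (N : zmodType) (A : N -> Prop) : Prop :=
  A 0 /\ forall x y, A x -> A y -> A (x - y).

Definition torsion_free (N : zmodType) (A : N -> Prop) : Prop :=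
  forall x, A x -> torsion x -> x = 0.

Definition finite_index_in (N : zmodType) (B A : N -> Prop) : Prop :=
  exists (k : nat) (r : 'I_k -> N),
    (forall m, A (r m)) /\ forall x, A x -> exists m, B (x - r m).

(* iota : N -> 'rV[R]_n is a model of N -> N (x)_Z R: it is additive, its
   kernel is N_tor, and there are e_1..e_n in N which generate N modulo
   torsion and whose images form an R-basis of 'rV_n. *)
Definition realification (R : realType) (N : zmodType) (n : nat)
  (iota : N -> 'rV[R]_n) : Prop :=
  [/\ additive_fun iota,
      (forall x, iota x = 0 <-> torsion x) &
      exists e : 'I_n -> N,
        (forall x, exists c : 'I_n -> int, torsion (x - \sum_(i < n) e i *~ c i))
        /\ row_free (\matrix_(i < n) iota (e i))].

Definition set_eq (T : Type) (A B : T -> Prop) : Prop := forall v, A v <-> B v.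

Definition rational_cone (R : realType) (N : zmodType) (n : nat)
  (iota : N -> 'rV[R]_n) (C : 'rV[R]_n -> Prop) : Prop :=
  exists (k : nat) (g : 'I_k -> N),
    forall v, C v <-> exists c : 'I_k -> R,
      (forall m, 0 <= c m) /\ v = \sum_(m < k) c m *: iota (g m).

Definition sharp (R : realType) (n : nat) (C : 'rV[R]_n -> Prop) : Prop :=
  forall v, C v -> C (- v) -> v = 0.

Definition face (R : realType) (n : nat) (tau sigma : 'rV[R]_n -> Prop) : Prop :=
  exists u : 'cV[R]_n,
    (forall v, sigma v -> 0 <= (v *m u) 0 0) /\
    (forall v, tau v <-> sigma v /\ (v *m u) 0 0 = 0).

Definition span (R : realType) (n : nat) (C : 'rV[R]_n -> Prop) (v : 'rV[R]_n)
  : Prop :=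
  exists (k : nat) (w : 'I_k -> 'rV[R]_n) (c : 'I_k -> R),
    (forall m, C (w m)) /\ v = \sum_(m < k) c m *: w m.

(* A KM fan (N, F, {F_sigma}) : the cones of F are indexed (without
   repetition) by a finite type I, sigma i is the i-th cone and Lat i is the
   lattice datum F_(sigma i). *)
Definition lattice_datum (R : realType) (N : zmodType) (n : nat)
  (iota : N -> 'rV[R]_n) (sigma : 'rV[R]_n -> Prop) (A : N -> Prop) : Prop :=
  [/\ subgroup A, torsion_free A,
      (forall x, A x -> span sigma (iota x)) &
      finite_index_in A (fun x => span sigma (iota x))].

Definition KMfan (R : realType) (N : zmodType) (n : nat) (iota : N -> 'rV[R]_n)
  (I : finType) (sigma : I -> 'rV[R]_n -> Prop) (Lat : I -> N -> Prop) : Prop :=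
  finitely_generated N /\ realification iota /\ (0 < #|I|)%N /\
  (forall i, rational_cone iota (sigma i) /\ sharp (sigma i)) /\
  (forall i j, set_eq (sigma i) (sigma j) -> i = j) /\
  (forall i (tau : 'rV[R]_n -> Prop), face tau (sigma i) ->
      exists j, set_eq tau (sigma j)) /\
  (forall i j, exists k,
      [/\ set_eq (sigma k) (fun v => sigma i v /\ sigma j v),
          face (sigma k) (sigma i) & face (sigma k) (sigma j)]) /\
  (forall i, lattice_datum iota (sigma i) (Lat i)) /\
  (forall i j, face (sigma j) (sigma i) ->
      forall x, Lat j x <-> Lat i x /\ span (sigma j) (iota x)).

(* fR is the realification f_R of f : it is R-linear and fR o iota = iota' o f
   (this determines fR uniquely since iota(N) spans). *)
Definition realified_map (R : realType) (N N' : zmodType) (n n' : nat)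
  (iota : N -> 'rV[R]_n) (iota' : N' -> 'rV[R]_n') (f : N -> N')
  (fR : 'rV[R]_n -> 'rV[R]_n') : Prop :=
  (forall (a : R) u v, fR (a *: u + v) = a *: fR u + fR v) /\
  (forall x, fR (iota x) = iota' (f x)).

Definition KMmorphism (R : realType) (N N' : zmodType) (n n' : nat)
  (I I' : finType) (sigma : I -> 'rV[R]_n -> Prop) (Lat : I -> N -> Prop)
  (sigma' : I' -> 'rV[R]_n' -> Prop) (Lat' : I' -> N' -> Prop)
  (f : N -> N') (fR : 'rV[R]_n -> 'rV[R]_n') : Prop :=
  additive_fun f /\
  forall i, exists j, (forall v, sigma i v -> sigma' j (fR v)) /\
                      (forall x, Lat i x -> Lat' j (f x)).

Definition lifting (R : realType) (N : zmodType) (n : nat)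
  (iota : N -> 'rV[R]_n) (sigma : 'rV[R]_n -> Prop) (A L : N -> Prop) : Prop :=
  [/\ subgroup L, torsion_free L, finite_index_in L (fun _ => True) &
      forall x, A x <-> L x /\ span sigma (iota x)].

Definition torsion_mod (N : zmodType) (A : N -> Prop) (x : N) : Prop :=
  exists k : nat, (0 < k)%N /\ A (x *+ k).

(* The map (N/A)_tor -> (N'/A')_tor induced by f is injective *)
Definition induced_tor_injective (N N' : zmodType) (f : N -> N')
  (A : N -> Prop) (A' : N' -> Prop) : Prop :=
  forall x y, torsion_mod A x -> torsion_mod A y -> A' (f x - f y) -> A (x - y).

Definition induced_injective (N N' : zmodType) (f : N -> N')
  (L : N -> Prop) (L' : N' -> Prop) : Prop :=
  forall x y, L' (f x - f y) -> L (x - y).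

(* Main.v *)
Require Import Defs.
From HB Require Import structures.
From mathcomp Require Import all_boot all_order all_algebra.
From mathcomp Require Import reals.
From Stdlib Require Import Classical ClassicalEpsilon.

Set Implicit Arguments.
Unset Strict Implicit.
Unset Printing Implicit Defensive.
Import Order.TTheory GRing.Theory Num.Theory.
Local Open Scope ring_scope.

Lemma af0 (N N' : zmodType) (f : N -> N') : additive_fun f -> f 0 = 0.
Proof. by move=> hf; have h := hf 0 0; rewrite !subrr in h. Qed.

Lemma afN (N N' : zmodType) (f : N -> N') x : additive_fun f -> f (- x) = - f x.
Proof. by move=> hf; have h := hf 0 x; rewrite sub0r (af0 hf) sub0r in h. Qed.

Lemma afD (N N' : zmodType) (f : N -> N') x y :
  additive_fun f -> f (x + y) = f x + f y.
Proof. by move=> hf; have h := hf x (- y); rewrite (afN _ hf) !opprK in h. Qed.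

Lemma afMn (N N' : zmodType) (f : N -> N') x k :
  additive_fun f -> f (x *+ k) = f x *+ k.
Proof.
move=> hf; elim: k => [|k IH]; first by rewrite !mulr0n (af0 hf).
by rewrite !mulrS (afD _ _ hf) IH.
Qed.

Lemma sg0 (N : zmodType) (A : N -> Prop) : subgroup A -> A 0.
Proof. by case. Qed.

Lemma sgN (N : zmodType) (A : N -> Prop) x : subgroup A -> A x -> A (- x).
Proof. by move=> [h0 hB] hx; rewrite -sub0r; apply: hB. Qed.

Lemma sgD (N : zmodType) (A : N -> Prop) x y : subgroup A -> A x -> A y -> A (x + y).
Proof. by move=> hA hx hy; rewrite -[y]opprK; apply: hA.2 => //; apply: sgN. Qed.

Lemma sgMn (N : zmodType) (A : N -> Prop) x k : subgroup A -> A x -> A (x *+ k).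
Proof.
move=> hA hx; elim: k => [|k IH]; first by rewrite mulr0n; apply: sg0.
by rewrite mulrS; apply: sgD.
Qed.

Lemma fi_mult (N : zmodType) (B A : N -> Prop) : subgroup B ->
  (forall x k, A x -> A (x *+ k)) -> finite_index_in B A ->
  exists K, (0 < K)%N /\ forall x, A x -> B (x *+ K).
Proof.
move=> hB hA [k [r [_ hr]]]; exists k`!; split; first exact: fact_gt0.
move=> x Ax.
have H : forall t : 'I_k.+1, exists m, B (x *+ t - r m) by move=> t; apply: hr; apply: hA.
pose g t := proj1_sig (constructive_indefinite_description _ (H t)).
have hg (t : 'I_k.+1) : B (x *+ t - r (g t)) := proj2_sig (constructive_indefinite_description _ (H t)).
have [t1 [t2 [ne e]]] : exists t1 t2 : 'I_k.+1, t1 <> t2 /\ g t1 = g t2.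
  apply: NNPP => hn.
  have inj : injective g.
    move=> a b e; apply: NNPP => ne; apply: hn; by exists a, b.
  by have := leq_card _ inj; rewrite !card_ord ltnn.
have key : forall a b : 'I_k.+1, (a < b)%N -> g a = g b -> B (x *+ k`!).
  move=> a b ab gab.
  have hd : B (x *+ (b - a)).
    rewrite mulrnBr; last exact: ltnW.
    have := hB.2 _ _ (hg b) (hg a).
    by rewrite gab opprB addrA subrK.
  have : (b - a %| k`!)%N.
    apply: dvdn_fact; rewrite subn_gt0 ab /=.
    by apply: leq_trans (leq_subr _ _) _; rewrite -ltnS.
  move/divnK => <-; rewrite mulnC mulrnA; exact: sgMn.
case: (ltngtP t1 t2) => [lt|gt|eq]; first exact: key lt e.
  exact: key gt (esym e).
by exfalso; apply: ne; apply: val_inj.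
Qed.

Lemma fi_of_mult (N : zmodType) (B : N -> Prop) (k : nat) :
  finitely_generated N -> subgroup B -> (0 < k)%N ->
  (forall y, B (y *+ k)) -> finite_index_in B (fun _ => True).
Proof.
move=> [m [g hg]] hB k0 hk.
exists #|{ffun 'I_m -> 'I_k}|.
exists (fun t : 'I_#|{ffun 'I_m -> 'I_k}| => \sum_(i < m) g i *+ (enum_val t i)).
split=> // x _.
have [c ->] := hg x.
have kz : (0 < k%:Z) by rewrite ltz_nat.
have hlt i : (absz (c i %% k%:Z)%Z < k)%N.
  by rewrite -ltz_nat gez0_abs ?ltz_pmod // modz_ge0 // gt_eqF.
pose u := [ffun i => Ordinal (hlt i)].
exists (enum_rank u); rewrite enum_rankK -sumrB.
have e i : g i *~ c i - g i *+ u i = (g i *~ (c i %/ k%:Z)%Z) *+ k.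
  rewrite ffunE /=.
  have r0 : 0 <= (c i %% k%:Z)%Z by rewrite modz_ge0 // gt_eqF.
  have er : g i *~ (c i %% k%:Z)%Z = g i *+ `|(c i %% k%:Z)%Z|%N.
    by rewrite -{1}(gez0_abs r0).
  rewrite {1}(divz_eq (c i) k) mulrzDr er.
  by rewrite addrK mulrzA.
by rewrite (eq_bigr _ (fun i _ => e i)) sumrMnl; apply: hk.
Qed.

Lemma span_scale (R : realType) (n : nat) (C : 'rV[R]_n -> Prop) v a :
  Defs.span C v -> Defs.span C (a *: v).
Proof.
move=> [k [w [c [hw ->]]]]; exists k, w, (fun m => a * c m); split=> //.
by rewrite scaler_sumr; apply: eq_bigr => m _; rewrite scalerA.
Qed.

Lemma span_add (R : realType) (n : nat) (C : 'rV[R]_n -> Prop) u v :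
  Defs.span C u -> Defs.span C v -> Defs.span C (u + v).
Proof.
move=> [k1 [w1 [c1 [hw1 ->]]]] [k2 [w2 [c2 [hw2 ->]]]].
exists (k1 + k2)%N.
exists (fun m => match split m with inl a => w1 a | inr b => w2 b end).
exists (fun m => match split m with inl a => c1 a | inr b => c2 b end).
split; first by move=> m; case: (split m).
rewrite big_split_ord /=; congr (_ + _); apply: eq_bigr => m _.
  by rewrite (unsplitK (inl m)).
by rewrite (unsplitK (inr m)).
Qed.

Lemma lin_facts (R : realType) (n n' : nat) (fR : 'rV[R]_n -> 'rV[R]_n') :
  (forall (a : R) u v, fR (a *: u + v) = a *: fR u + fR v) ->
  [/\ fR 0 = 0, (forall u v, fR (u + v) = fR u + fR v) &
      forall a u, fR (a *: u) = a *: fR u].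
Proof.
move=> H.
have f0 : fR 0 = 0.
  have h := H 1 0 0; rewrite !scale1r addr0 in h.
  by apply: (@addrI _ (fR 0)); rewrite addr0 -h.
split=> //.
  by move=> u v; have := H 1 u v; rewrite !scale1r.
by move=> a u; have := H a u 0; rewrite !addr0 f0 addr0.
Qed.

Lemma span_image (R : realType) (n n' : nat) (fR : 'rV[R]_n -> 'rV[R]_n')
  (C : 'rV[R]_n -> Prop) (C' : 'rV[R]_n' -> Prop) v :
  (forall (a : R) u v, fR (a *: u + v) = a *: fR u + fR v) ->
  (forall x, C x -> C' (fR x)) -> Defs.span C v -> Defs.span C' (fR v).
Proof.
move=> /lin_facts [f0 fD fZ] hC [k [w [c [hw ->]]]].
exists k, (fun m => fR (w m)), c; split; first by move=> m; apply: hC.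
rewrite (big_morph fR fD f0); apply: eq_bigr => m _; exact: fZ.
Qed.

Lemma tm_sub (N : zmodType) (A : N -> Prop) x y : subgroup A ->
  torsion_mod A x -> torsion_mod A y -> torsion_mod A (x - y).
Proof.
move=> hA [a [a0 ha]] [b [b0 hb]]; exists (a * b)%N; split; first by rewrite muln_gt0 a0.
rewrite mulrnBl {2}mulnC !mulrnA; apply: hA.2; exact: sgMn.
Qed.

Lemma span_div (R : realType) (n : nat) (C : 'rV[R]_n -> Prop) v k :
  (0 < k)%N -> Defs.span C (v *+ k) -> Defs.span C v.
Proof.
move=> k0 h; have := span_scale (k%:R^-1) h.
by rewrite -scaler_nat scalerA mulVf ?scale1r // pnatr_eq0 -lt0n.
Qed.

Theorem lemma2p5p6 (R : realType)
  (N N' : zmodType) (n n' : nat)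
  (iota : N -> 'rV[R]_n) (iota' : N' -> 'rV[R]_n')
  (I I' : finType)
  (sigma : I -> 'rV[R]_n -> Prop) (Lat : I -> N -> Prop)
  (sigma' : I' -> 'rV[R]_n' -> Prop) (Lat' : I' -> N' -> Prop)
  (f : N -> N') (fR : 'rV[R]_n -> 'rV[R]_n')
  (hF : KMfan iota sigma Lat) (hF' : KMfan iota' sigma' Lat')
  (hfR : realified_map iota iota' f fR)
  (hf : KMmorphism sigma Lat sigma' Lat' f fR)
  (i : I) (j : I') (hij : forall v, sigma i v -> sigma' j (fR v))
  (L' : N' -> Prop) (hL' : lifting iota' (sigma' j) (Lat' j) L') :
  [/\ (* (1) *)
      (exists L : N -> Prop, lifting iota (sigma i) (Lat i) L /\
          forall x, L x -> L' (f x)),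
      (* (2) *)
      ((forall x y, torsion x -> torsion y -> f x = f y -> x = y) ->
       (forall x y, Lat i x -> Lat i y -> f x = f y -> x = y) ->
       (forall y', Lat' j y' -> exists x, Lat i x /\ f x = y') ->
       induced_tor_injective f (Lat i) (Lat' j)),
      (* (3) *)
      (induced_tor_injective f (Lat i) (Lat' j) ->
       lifting iota (sigma i) (Lat i) (fun x => L' (f x)) /\
       induced_injective f (fun x => L' (f x)) L') &
      (* (4) *)
      ((exists L : N -> Prop, [/\ lifting iota (sigma i) (Lat i) L,
            (forall x, L x -> L' (f x)) & induced_injective f L L']) ->
       induced_tor_injective f (Lat i) (Lat' j))].
Proof.
case: hF => fgN [[iotaA iota0 _] [_ [_ [_ [_ [_ [latN _]]]]]]].
case: hF' => _ [_ [_ [_ [_ [_ [inter' [latN' face']]]]]]].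
case: hfR => fRlin fRi; case: hf => fA fmor.
case: hL' => L'sg L'tf L'fi L'iff.
case: (latN i) => Lsg Ltf Lspan Lfi.
have Lj0 : Lat' j 0 by case: (latN' j) => /sg0.
have fLat : forall x, Lat i x -> Lat' j (f x).
  have [j0 [hs0 hl0]] := fmor i.
  have [k [ek fkj fkj0]] := inter' j j0.
  move=> x hx; apply: ((face' j k fkj (f x)).1 _).1.
  apply: (face' j0 k fkj0 (f x)).2; split; first exact: hl0.
  rewrite -fRi; apply: (span_image fRlin _ (Lspan x hx)).
  by move=> v hv; apply: (ek (fR v)).2; split; [apply: hij | apply: hs0].
have [K1 [K10 hK1]] : exists K, (0 < K)%N /\
    forall x, Defs.span (sigma i) (iota x) -> Lat i (x *+ K).
  apply: fi_mult => // x k hx.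
  by rewrite (afMn _ _ iotaA) -scaler_nat; apply: span_scale.
have [K2 [K20 hK2]] : exists K, (0 < K)%N /\ forall x, True -> L' (x *+ K).
  exact: fi_mult.
split.
-
  pose k := (K1 * K2)%N.
  have k0 : (0 < k)%N by rewrite muln_gt0 K10.
  have hy1 y : Defs.span (sigma i) (iota y) -> Lat i (y *+ k).
    by move=> hy; rewrite mulrnA; apply: sgMn => //; apply: hK1.
  pose L x := exists a y, Lat i a /\ x = a + y *+ k.
  have Lsub : subgroup L.
    split; first by exists 0, 0; split; [exact: sg0 | rewrite mul0rn addr0].
    move=> _ _ [a [y [ha ->]]] [a' [y' [ha' ->]]]; exists (a - a'), (y - y').
    by split; [exact: Lsg.2 | rewrite mulrnBl opprD addrACA].
  exists L; split; last first.
    move=> _ [a [y [ha ->]]]; rewrite (afD _ _ fA) (afMn _ _ fA).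
    apply: sgD => //; first exact: ((L'iff _).1 (fLat a ha)).1.
    by rewrite /k mulnC mulrnA; apply: sgMn => //; apply: hK2.
  split=> //.
  + move=> _ [a [y [ha ->]]] ht.
    have := (iota0 (a + y *+ k)).2 ht; rewrite (afD _ _ iotaA) (afMn _ _ iotaA).
    move/eqP; rewrite addrC addr_eq0 => /eqP h.
    have sy : Defs.span (sigma i) (iota y).
      apply: (span_div k0); rewrite h -scaleN1r; apply: span_scale; exact: Lspan.
    apply: Ltf => //; apply: sgD => //; exact: hy1.
  + apply: (fi_of_mult fgN Lsub k0) => y; exists 0, y; split; [exact: sg0 | by rewrite add0r].
  + move=> x; split.
      move=> hx; split; last exact: Lspan.
      by exists x, 0; split=> //; rewrite mul0rn addr0.
    move=> [[a [y [ha ->]]] hs]; apply: sgD => //; apply: hy1.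
    apply: (span_div k0).
    have -> : iota y *+ k = iota (a + y *+ k) + (-1) *: iota a.
      by rewrite (afD _ _ iotaA) (afMn _ _ iotaA) scaleN1r addrAC subrr add0r.
    apply: span_add => //; apply: span_scale; exact: Lspan.
- move=> torinj latinj latsurj x y tx ty hxy.
  have [k [k0 hk]] := tm_sub Lsg tx ty.
  rewrite -fA in hxy; have [w [hw fw]] := latsurj _ hxy.
  have e0 : f (x - y - w) = 0 by rewrite fA fw subrr.
  have ht : (x - y - w) *+ k = 0.
    apply: latinj; first by rewrite mulrnBl; apply: Lsg.2 => //; exact: sgMn.
      exact: sg0.
    by rewrite (afMn _ _ fA) e0 mul0rn (af0 fA).
  have : x - y - w = 0.
    apply: torinj; first by exists k.
      by exists 1%N.
    by rewrite e0 (af0 fA).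
  by move/subr0_eq => ->.
- move=> hti.
  have Lsub : subgroup (fun x => L' (f x)).
    split; first by rewrite (af0 fA); exact: sg0.
    by move=> x y hx hy; rewrite fA; apply: L'sg.2.
  split; last by move=> x y h; rewrite fA.
  split=> //.
  + move=> x hx tx.
    have fx0 : f x = 0.
      apply: L'tf => //; case: tx => k [k0 e]; exists k; split=> //.
      by rewrite -(afMn _ _ fA) e (af0 fA).
    have := hti x 0; rewrite subr0 => h; apply: (Ltf _ _ tx); apply: h.
    * by case: tx => k [k0 e]; exists k; rewrite e; split=> //; exact: sg0.
    * by exists 1%N; rewrite mul0rn; split=> //; exact: sg0.
    * by rewrite fx0 (af0 fA) subrr.
  + apply: (fi_of_mult fgN Lsub K20) => y; rewrite (afMn _ _ fA); exact: hK2.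
  + move=> x; split.
      move=> hx; split; last exact: Lspan.
      exact: ((L'iff _).1 (fLat x hx)).1.
    move=> [hx hs].
    have := hti x 0; rewrite subr0; apply.
    * by exists K1; split=> //; apply: hK1.
    * by exists 1%N; rewrite mul0rn; split=> //; exact: sg0.
    rewrite (af0 fA) subr0; apply: (L'iff _).2; split=> //.
    rewrite -fRi; exact: (span_image fRlin hij hs).
- move=> [L [[_ _ _ Liff] fL inj]] x y tx ty hxy.
  have h1 : L' (f x - f y) := ((L'iff _).1 hxy).1.
  apply: (Liff _).2; split; first exact: inj.
  have [k [k0 hk]] := tm_sub Lsg tx ty.
  apply: (span_div k0); rewrite -(afMn _ _ iotaA); exact: Lspan.
Qed.
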